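(* (Subject expansion.) If $\Gamma\vdash t_2:\sigma$ is derivable in $\cap J$ and $t_1\to_{d\beta} t_2$ is a non-erasing step, then $\Gamma\vdash t_1:\sigma$ is derivable in $\cap J$.
   Context: Terms $\mathtt T_J$: $t,u,r ::= x \mid \lambda x.t \mid t(u,y.r)$ ($y$ bound in $r$), up to $\alpha$-equivalence; $\{u/x\}t$ capture-avoiding substitution. List contexts $\mathtt D ::= \Diamond \mid t(u,y.\mathtt D)$. Distant beta: $\mathtt D\langle\lambda x.t\rangle(u,y.r) \mapsto_{d\beta} \{\{u/x\}\mathtt D\langle t\rangle/y\}r$ (variables bound by $\mathtt D$ not free in $u$, $x$ not in $\mathtt D$), $\to_{d\beta}$ its closure under all contexts. A step is non-erasing if the contracted redex $\mathtt D\langle\lambda x.t\rangle(u,y.r)$ satisfies $x\in\mathrm{fv}(t)$ and $y\in\mathrm{fv}(r)$. System $\cap J$: types $\sigma,\tau ::= \alpha \mid \mathcal M\to\sigma$, $\mathcal M=[\sigma_i]_{i\in I}$ a finite possibly empty multiset; $\sqcup$ multiset union; environments map variables to multisets, $\wedge$ pointwise union, $\Gamma;x:\mathcal M$ extension with $x\notin\mathrm{dom}\,\Gamma$. $\mathrm{ch}(\mathcal M)=\mathcal M$ if $\mathcal M\ne[\,]$, $\mathrm{ch}([\,])=[\tau]$ for an arbitrary $\tau$. Rules: (var) $x:[\sigma]\vdash x:\sigma$; (abs) from $\Gamma;x:\mathcal M\vdash t:\sigma$ infer $\Gamma\vdash\lambda x.t:\mathcal M\to\sigma$; (many) from $(\Gamma_i\vdash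 t:\sigma_i)_{i\in I}$, $I\ne\emptyset$, infer $\wedge_i\Gamma_i\vdash t:[\sigma_i]_{i\in I}$; (app) from $\Gamma\vdash t:\mathrm{ch}([\mathcal M_i\to\tau_i]_{i\in I})$, $\Delta\vdash u:\mathrm{ch}(\sqcup_i\mathcal M_i)$, $\Lambda;y:[\tau_i]_{i\in I}\vdash r:\sigma$ infer $\Gamma\wedge\Delta\wedge\Lambda\vdash t(u,y.r):\sigma$. *)

(* Defs.v *)
(* Terms of Lambda-J in de Bruijn representation (alpha-equivalence
   is built in); intersection type system cap-J with multisets as lists taken up
   to (deep) permutation. *)
From Stdlib Require Import List Permutation Arith.
Import ListNotations.

(* App t u r  represents  t(u, y.r) ; index 0 in r is the bound y. *)
Inductive term : Type :=
| Var : nat -> term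
| Lam : term -> term
| App : term -> term -> term -> term.

Fixpoint lift (d c : nat) (t : term) : term :=
  match t with
  | Var n => Var (if Nat.leb c n then n + d else n)
  | Lam t' => Lam (lift d (S c) t')
  | App a b r => App (lift d c a) (lift d c b) (lift d (S c) r)
  end.

(* subst n u t : capture-avoiding {u/n}t, where u lives in the scope outside the
   n binders crossed; indices above n are decremented (index n is consumed). *)
Fixpoint subst (n : nat) (u : term) (t : term) : term :=
  match t with
  | Var m =>
      match Nat.compare m n with
      | Eq => lift n 0 u
      | Gt => Var (pred m)
      | Lt => Var m
      end
  | Lam t' => Lam (subst (S n) u t')
  | App a b r => App (subst n u a) (subst n u b) (subst (S n) u r)
  end.

Fixpoint occurs (n : nat) (t : term) : bool :=
  match t with
  | Var m => Nat.eqb m n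
  | Lam t' => occurs (S n) t'
  | App a b r => occurs n a || occurs n b || occurs (S n) r
  end.

Inductive lctx : Type :=
| LHole : lctx
| LApp : term -> term -> lctx -> lctx.

Fixpoint plug (D : lctx) (s : term) : term :=
  match D with
  | LHole => s
  | LApp t u D' => App t u (plug D' s)
  end.

Fixpoint ldepth (D : lctx) : nat :=
  match D with
  | LHole => 0
  | LApp _ _ D' => S (ldepth D')
  end.

(* Distant beta at the root:
   D<\x.t>(u, y.r)  |->  {{u/x} D<t> / y} r .
   Under the k = ldepth D binders of D, u must be lifted by k; the side
   conditions of the paper are automatic in de Bruijn notation. *)
Inductive dbeta_root : term -> term -> Prop :=
| DBetaRoot : forall D t u r,
    dbeta_root (App (plug D (Lam t)) u r)
               (subst 0 (plug D (subst 0 (lift (ldepth D) 0 u) t)) r).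

Inductive dbeta_root_ne : term -> term -> Prop :=
| DBetaRootNE : forall D t u r,
    occurs 0 t = true -> occurs 0 r = true ->
    dbeta_root_ne (App (plug D (Lam t)) u r)
                  (subst 0 (plug D (subst 0 (lift (ldepth D) 0 u) t)) r).

Inductive ctx_closure (R : term -> term -> Prop) : term -> term -> Prop :=
| CRoot : forall t t', R t t' -> ctx_closure R t t'
| CLam : forall t t', ctx_closure R t t' -> ctx_closure R (Lam t) (Lam t')
| CApp1 : forall t t' u r, ctx_closure R t t' -> ctx_closure R (App t u r) (App t' u r)
| CApp2 : forall t u u' r, ctx_closure R u u' -> ctx_closure R (App t u r) (App t u' r)
| CApp3 : forall t u r r', ctx_closure R r r' -> ctx_closure R (App t u r) (App t u r').

Definition dbeta_step := ctx_closure dbeta_root.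
Definition dbeta_step_ne := ctx_closure dbeta_root_ne.

(* sigma ::= alpha | M -> sigma ; multisets M represented by lists *)
Inductive ty : Type :=
| TVar : nat -> ty
| TArr : list ty -> ty -> ty.

Inductive ty_eq : ty -> ty -> Prop :=
| TyEqVar : forall a, ty_eq (TVar a) (TVar a)
| TyEqArr : forall M M1 M' s s',
    Permutation M M1 -> Forall2 ty_eq M1 M' -> ty_eq s s' ->
    ty_eq (TArr M s) (TArr M' s').

Definition mset_eq (M M' : list ty) : Prop :=
  exists M1, Permutation M M1 /\ Forall2 ty_eq M1 M'.

Definition env := nat -> list ty.

Definition env_eq (G G' : env) : Prop := forall n, mset_eq (G n) (G' n).

Definition env_single (x : nat) (s : ty) : env :=
  fun n => if Nat.eqb n x then [s] else [].

Definition env_union (G D : env) : env := fun n => G n ++ D n.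

Definition env_ext (M : list ty) (G : env) : env :=
  fun n => match n with 0 => M | S m => G m end.

Definition ch (tau : ty) (M : list ty) : list ty :=
  match M with [] => [tau] | _ => M end.

Inductive typed : env -> term -> ty -> Prop :=
| T_var : forall x s, typed (env_single x s) (Var x) s
| T_abs : forall G M t s,
    typed (env_ext M G) t s -> typed G (Lam t) (TArr M s)
| T_app : forall (G D Lam_env : env) (t u r : term) (s : ty)
      (L : list (list ty * ty)) (tau0 tau1 : ty),
    mtyped G t (ch tau0 (map (fun p => TArr (fst p) (snd p)) L)) ->
    mtyped D u (ch tau1 (concat (map fst L))) ->
    typed (env_ext (map snd L) Lam_env) r s ->
    typed (env_union G (env_union D Lam_env)) (App t u r) s
| T_conv : forall G G' t s s',
    typed G t s -> env_eq G G' -> ty_eq s s' -> typed G' t s'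
with mtyped : env -> term -> list ty -> Prop :=
| M_one : forall G t s, typed G t s -> mtyped G t [s]
| M_cons : forall G D t s M,
    typed G t s -> mtyped D t M -> mtyped (env_union G D) t (s :: M)
| M_conv : forall G G' t M M',
    mtyped G t M -> env_eq G G' -> mset_eq M M' -> mtyped G' t M'.

(* Main.v *)
Require Import Defs.
From Stdlib Require Import List Permutation Arith Lia.
Import ListNotations.

Fixpoint ty_ind' (P : ty -> Prop) (Hv : forall a, P (TVar a))
  (Ha : forall M s, Forall P M -> P s -> P (TArr M s)) (t : ty) : P t :=
  match t with
  | TVar a => Hv a
  | TArr M s => Ha M s
      ((fix f (l : list ty) : Forall P l :=
          match l with
          | [] => Forall_nil P
          | x :: l' => Forall_cons x (ty_ind' P Hv Ha x) (f l')
          end) M) (ty_ind' P Hv Ha s)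
  end.

Lemma ty_eq_refl : forall t, ty_eq t t.
Proof.
  apply ty_ind'; intros.
  - constructor.
  - econstructor; [apply Permutation_refl| |auto].
    induction H; constructor; auto.
Qed.

Lemma Forall2_refl_ty : forall M, Forall2 ty_eq M M.
Proof. induction M; constructor; auto using ty_eq_refl. Qed.

Lemma Forall2_flip_F : forall (R : ty -> ty -> Prop) M M',
  Forall (fun x => forall y, R x y -> R y x) M -> Forall2 R M M' -> Forall2 R M' M.
Proof.
  intros R M M' HF H2; induction H2; constructor; inversion HF; subst; auto.
Qed.

Lemma Forall2_flip {A} (R : A -> A -> Prop) l l' :
  Forall2 R l l' -> Forall2 (fun x y => R y x) l' l.
Proof. induction 1; constructor; auto. Qed.

Lemma perm_forall {A} (P : A -> Prop) l l' : Permutation l l' -> Forall P l -> Forall P l'.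
Proof. intros Hp HF; exact (Permutation_Forall Hp HF). Qed.

Lemma ty_eq_sym : forall t t', ty_eq t t' -> ty_eq t' t.
Proof.
  intro t; induction t using ty_ind'; intros t' H'; inversion H'; subst.
  - constructor.
  - rename H2 into Hp, H3 into Hf.
    assert (HF1 : Forall (fun x => forall y, ty_eq x y -> ty_eq y x) M1)
      by (eapply perm_forall; eauto).
    assert (Hf' : Forall2 ty_eq M' M1)
      by (eapply Forall2_flip_F; eauto).
    destruct (Permutation_Forall2 (Permutation_sym Hp) (Forall2_flip _ _ _ Hf'))
      as [M2 [Hp2 Hf2]].
    econstructor; [exact Hp2| |auto].
    apply Forall2_flip in Hf2. exact Hf2.
Qed.

Lemma ty_eq_trans : forall t t' t'', ty_eq t t' -> ty_eq t' t'' -> ty_eq t t''.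
Proof.
  intro t; induction t using ty_ind'; intros t' t'' H1 H2; inversion H1; subst.
  - exact H2.
  - inversion H2; subst.
    rename H4 into Hp1, H5 into Hf1, H6 into Hp2, H8 into Hf2.
    destruct (Permutation_Forall2 Hp2 (Forall2_flip _ _ _ Hf1))
      as [M1' [Hp3 Hf3]].
    apply Forall2_flip in Hf3.
    assert (HF : Forall (fun x => forall y z, ty_eq x y -> ty_eq y z -> ty_eq x z) M1')
      by (eapply perm_forall; [exact Hp3|]; eapply perm_forall; eauto).
    econstructor; [eapply Permutation_trans; eauto| |eauto].
    clear -HF Hf3 Hf2. revert M'0 Hf2. induction Hf3; intros M'0 Hf2; inversion Hf2; subst;
      inversion HF; subst; constructor; eauto.
Qed.

Lemma mset_ty : forall M M', mset_eq M M' <-> ty_eq (TArr M (TVar 0)) (TArr M' (TVar 0)).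
Proof.
  split; intro H.
  - destruct H as [M1 [Hp Hf]]; econstructor; eauto; constructor.
  - inversion H; subst; exists M1; auto.
Qed.

Lemma mset_refl : forall M, mset_eq M M.
Proof. intro; apply mset_ty, ty_eq_refl. Qed.
Lemma mset_sym : forall M M', mset_eq M M' -> mset_eq M' M.
Proof. intros; apply mset_ty, ty_eq_sym, mset_ty; auto. Qed.
Lemma mset_trans : forall M M' M'', mset_eq M M' -> mset_eq M' M'' -> mset_eq M M''.
Proof. intros; apply mset_ty; eapply ty_eq_trans; apply mset_ty; eauto. Qed.
Lemma mset_perm : forall M M', Permutation M M' -> mset_eq M M'.
Proof. intros; exists M'; split; auto using Forall2_refl_ty. Qed.
Lemma mset_app : forall A A' B B', mset_eq A A' -> mset_eq B B' -> mset_eq (A ++ B) (A' ++ B').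
Proof.
  intros A A' B B' [A1 [H1 H2]] [B1 [H3 H4]]; exists (A1 ++ B1); split;
  auto using Permutation_app, Forall2_app.
Qed.
Lemma mset_nil : forall M, mset_eq M [] -> M = [].
Proof.
  intros M [M1 [Hp Hf]]; inversion Hf; subst; apply Permutation_sym, Permutation_nil in Hp; auto.
Qed.
Lemma mset_nil' : forall M, mset_eq [] M -> M = [].
Proof. intros; apply mset_nil, mset_sym; auto. Qed.
Lemma mset_len : forall M M', mset_eq M M' -> length M = length M'.
Proof.
  intros M M' [M1 [Hp Hf]]; rewrite (Permutation_length Hp); eapply Forall2_length; eauto.
Qed.
Lemma ty_eq_arr : forall M M' s s', mset_eq M M' -> ty_eq s s' -> ty_eq (TArr M s) (TArr M' s').
Proof. intros M M' s s' [M1 [H1 H2]] H; econstructor; eauto. Qed.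

Lemma env_eq_refl : forall G, env_eq G G.
Proof. intros G n; apply mset_refl. Qed.
Lemma env_eq_sym : forall G G', env_eq G G' -> env_eq G' G.
Proof. intros G G' H n; apply mset_sym; auto. Qed.
Lemma env_eq_trans : forall G G' G'', env_eq G G' -> env_eq G' G'' -> env_eq G G''.
Proof. intros G G' G'' H H' n; eapply mset_trans; eauto. Qed.
Lemma env_eq_ext : forall G G', (forall n, G n = G' n) -> env_eq G G'.
Proof. intros G G' H n; rewrite H; apply mset_refl. Qed.
Lemma env_eq_perm : forall G G', (forall n, Permutation (G n) (G' n)) -> env_eq G G'.
Proof. intros G G' H n; apply mset_perm; auto. Qed.
Lemma env_union_eq : forall G G' D D', env_eq G G' -> env_eq D D' ->
  env_eq (env_union G D) (env_union G' D').
Proof. intros; intro n; apply mset_app; auto. Qed.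
Definition empty : env := fun _ => [].
Definition tl_env (G : env) : env := fun m => G (S m).
Definition liftenv (d c : nat) (G : env) : env :=
  fun m => if m <? c then G m else if m <? c + d then [] else G (m - d).
Definition ins (n : nat) (M : list ty) (G : env) : env :=
  fun m => if m <? n then G m else if m =? n then M else G (pred m).

Ltac pw_split :=
  repeat match goal with
  | |- context [Nat.ltb ?a ?b] => destruct (Nat.ltb_spec a b)
  | |- context [Nat.eqb ?a ?b] => destruct (Nat.eqb_spec a b)
  end.

Ltac pw := apply env_eq_ext; intro;
  unfold env_union, env_single, env_ext, liftenv, ins, tl_env, empty; pw_split;
  try reflexivity; try lia.

Lemma inv_var : forall G x s, typed G (Var x) s ->
  exists s', ty_eq s' s /\ env_eq (env_single x s') G.
Proof.
  intros G x s H; remember (Var x) as v; induction H; inversion Heqv; subst.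
  - exists s; split; [apply ty_eq_refl|apply env_eq_refl].
  - destruct IHtyped as [s0 [K2 K3]]; auto.
    exists s0; split; [eapply ty_eq_trans|eapply env_eq_trans]; eauto.
Qed.

Lemma inv_lam : forall G t s, typed G (Lam t) s ->
  exists G' M s', typed (env_ext M G') t s' /\ env_eq G' G /\ ty_eq (TArr M s') s.
Proof.
  intros G t s H; remember (Lam t) as v; induction H; inversion Heqv; subst.
  - exists G, M, s; repeat split; auto using env_eq_refl, ty_eq_refl.
  - destruct IHtyped as [G2 [M [s2 [K2 [K3 K4]]]]]; auto.
    exists G2, M, s2; repeat split; auto; [eapply env_eq_trans|eapply ty_eq_trans]; eauto.
Qed.

Definition arr (p : list ty * ty) : ty := TArr (fst p) (snd p).

Lemma inv_app : forall G a b r s, typed G (App a b r) s ->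
  exists G1 D1 Lm L tau0 tau1,
    mtyped G1 a (ch tau0 (map arr L)) /\
    mtyped D1 b (ch tau1 (concat (map fst L))) /\
    typed (env_ext (map snd L) Lm) r s /\
    env_eq (env_union G1 (env_union D1 Lm)) G.
Proof.
  intros G a b r s H; remember (App a b r) as v; induction H; inversion Heqv; subst.
  - exists G, D, Lam_env, L, tau0, tau1; repeat split; auto using env_eq_refl.
  - destruct IHtyped as [G1 [D1 [Lm [L [tau0 [tau1 [K2 [K3 [K4 K5]]]]]]]]]; auto.
    exists G1, D1, Lm, L, tau0, tau1; repeat split; auto.
    + eapply T_conv; eauto using env_eq_refl.
    + eapply env_eq_trans; eauto.
Qed.

Lemma env_eq_nonempty : forall G G' n, env_eq G G' -> G n <> [] -> G' n <> [].
Proof.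
  intros G G' n H H1 H2; apply H1; apply mset_nil; rewrite <- H2; apply H.
Qed.

Scheme typed_mut := Induction for typed Sort Prop
with mtyped_mut := Induction for mtyped Sort Prop.

Lemma app_nonempty_l {A} (l l' : list A) : l <> [] -> l ++ l' <> [].
Proof. destruct l; simpl; congruence. Qed.
Lemma app_nonempty_r {A} (l l' : list A) : l' <> [] -> l ++ l' <> [].
Proof. destruct l; simpl; congruence. Qed.

Lemma relevance : forall G t s, typed G t s ->
  forall n, occurs n t = true -> G n <> [].
Proof.
  apply (typed_mut (fun G t s _ => forall n, occurs n t = true -> G n <> [])
                   (fun G t M _ => forall n, occurs n t = true -> G n <> []));
  intros; simpl in *.
  - unfold env_single. rewrite Nat.eqb_sym, H. congruence.
  - apply (H (S n)); auto.
  - unfold env_union.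
    destruct (occurs n t) eqn:E1; [apply app_nonempty_l; auto|].
    destruct (occurs n u) eqn:E2; [apply app_nonempty_r, app_nonempty_l; auto|].
    simpl in H2. apply app_nonempty_r, app_nonempty_r. apply (H1 (S n)); auto.
  - eapply env_eq_nonempty; eauto.
  - auto.
  - unfold env_union; apply app_nonempty_l; auto.
  - eapply env_eq_nonempty; eauto.
Qed.

Lemma lift_lift : forall u a b c, lift a c (lift b c u) = lift (a + b) c u.
Proof.
  induction u; intros; simpl; try (f_equal; auto; fail).
  f_equal. destruct (Nat.leb_spec c n); simpl.
  - destruct (Nat.leb_spec c (n + b)); [lia|lia].
  - destruct (Nat.leb_spec c n); lia.
Qed.

Lemma lift_0 : forall u c, lift 0 c u = u.
Proof.
  induction u; intros; simpl; try (f_equal; auto; fail).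
  destruct (c <=? n); f_equal; lia.
Qed.
Ltac pw ::= apply env_eq_ext; intro;
  unfold env_union, env_single, env_ext, liftenv, ins, tl_env, empty; pw_split;
  try reflexivity; try lia; try (f_equal; lia); try (repeat f_equal; lia).

Lemma tl_eq : forall G G', env_eq G G' -> env_eq (tl_env G) (tl_env G').
Proof. intros G G' H n; apply H. Qed.

Lemma ext_tl : forall G M, mset_eq (G 0) M -> env_eq G (env_ext M (tl_env G)).
Proof. intros G M H [|n]; simpl; auto. apply mset_refl. Qed.

Lemma ext_tl' : forall G, env_eq (env_ext (G 0) (tl_env G)) G.
Proof. intros G [|n]; apply mset_refl. Qed.

Lemma mtyped_map (X Y : term) (F : env -> env)
  (HF : forall A B, env_eq (env_union (F A) (F B)) (F (env_union A B)))
  (H : forall G s, typed G X s -> exists G', typed G' Y s /\ env_eq G (F G')) :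
  forall G M, mtyped G X M -> exists G', mtyped G' Y M /\ env_eq G (F G').
Proof.
  intros G M HM; remember X as x; induction HM; subst.
  - destruct (H _ _ H0) as [G' [K1 K2]]; exists G'; split; auto; constructor; auto.
  - destruct (H _ _ H0) as [G' [K1 K2]].
    destruct IHHM as [D' [K3 K4]]; auto.
    exists (env_union G' D'); split; [constructor; auto|].
    eapply env_eq_trans; [apply env_union_eq; eauto|apply HF].
  - destruct IHHM as [G2 [K1 K2]]; auto.
    exists G2; split; [eapply M_conv; eauto using env_eq_refl|].
    eapply env_eq_trans; [apply env_eq_sym; eauto| auto].
Qed.

Lemma anti_lift : forall u d c G s, typed G (lift d c u) s ->
  exists G', typed G' u s /\ env_eq G (liftenv d c G').
Proof.
  induction u; intros d c G s H; simpl in H.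
  - apply inv_var in H as [s' [K1 K2]].
    exists (env_single n s'); split.
    + eapply T_conv; [apply T_var|apply env_eq_refl|auto].
    + eapply env_eq_trans; [apply env_eq_sym; eauto|].
      destruct (Nat.leb_spec c n); pw.
  - apply inv_lam in H as [G0 [M [s0 [K1 [K2 K3]]]]].
    destruct (IHu _ _ _ _ K1) as [G1 [K4 K5]].
    assert (E0 : mset_eq (G1 0) M).
    { specialize (K5 0); unfold liftenv in K5; simpl in K5. apply mset_sym; auto. }
    exists (tl_env G1); split.
    + eapply T_conv; [apply T_abs| apply env_eq_refl|].
      * eapply T_conv; [exact K4| |apply ty_eq_refl]. apply env_eq_sym, ext_tl'.
      * eapply ty_eq_trans; [|exact K3]. apply ty_eq_arr; auto using ty_eq_refl.
    + eapply env_eq_trans; [apply env_eq_sym; exact K2|].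
      eapply env_eq_trans; [apply (tl_eq _ _ K5)|]. pw.
  - apply inv_app in H as [G1 [D1 [Lm [L [tau0 [tau1 [K1 [K2 [K3 K4]]]]]]]]].
    assert (HF : forall A B, env_eq (env_union (liftenv d c A) (liftenv d c B))
                                    (liftenv d c (env_union A B))) by (intros; pw).
    destruct (mtyped_map _ _ _ HF (IHu1 d c) _ _ K1) as [G1' [K5 K6]].
    destruct (mtyped_map _ _ _ HF (IHu2 d c) _ _ K2) as [D1' [K7 K8]].
    destruct (IHu3 _ _ _ _ K3) as [G3 [K9 K10]].
    assert (E0 : mset_eq (G3 0) (map snd L)).
    { specialize (K10 0); unfold liftenv in K10; simpl in K10. apply mset_sym; auto. }
    exists (env_union G1' (env_union D1' (tl_env G3))); split.
    + eapply T_app; eauto.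
      eapply T_conv; [exact K9| apply ext_tl; auto| apply ty_eq_refl].
    + eapply env_eq_trans; [apply env_eq_sym; exact K4|].
      eapply env_eq_trans; [apply env_union_eq; [exact K6|apply env_union_eq; [exact K8|]]|].
      * apply (tl_eq _ _ K10).
      * pw.
Qed.
Definition mtyped0 (D : env) (u : term) (M : list ty) : Prop :=
  (M = [] /\ env_eq D empty) \/ mtyped D u M.

Lemma union_assoc : forall A B C,
  env_eq (env_union A (env_union B C)) (env_union (env_union A B) C).
Proof. intros; pw; apply app_assoc. Qed.

Lemma union_comm : forall A B, env_eq (env_union A B) (env_union B A).
Proof. intros; apply env_eq_perm; intro; apply Permutation_app_comm. Qed.

Lemma perm_mid {A} (a b c d : list A) :
  Permutation ((a ++ b) ++ (c ++ d)) ((a ++ c) ++ (b ++ d)).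
Proof.
  rewrite <- !app_assoc. apply Permutation_app_head.
  rewrite !app_assoc. apply Permutation_app_tail, Permutation_app_comm.
Qed.

Lemma union_mid : forall A B C D,
  env_eq (env_union (env_union A B) (env_union C D)) (env_union (env_union A C) (env_union B D)).
Proof. intros; apply env_eq_perm; intro; apply perm_mid. Qed.

Lemma union_empty_l : forall A, env_eq (env_union empty A) A.
Proof. intros; pw. Qed.
Lemma union_empty_r : forall A, env_eq (env_union A empty) A.
Proof. intros; pw; apply app_nil_r. Qed.

Lemma liftenv_union : forall d c A B,
  env_eq (env_union (liftenv d c A) (liftenv d c B)) (liftenv d c (env_union A B)).
Proof. intros; pw. Qed.

Lemma liftenv_eq : forall d c A B, env_eq A B -> env_eq (liftenv d c A) (liftenv d c B).
Proof.
  intros d c A B H m; unfold liftenv; pw_split; auto using mset_refl.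
Qed.

Lemma mtyped_app : forall G1 u M1, mtyped G1 u M1 -> forall G2 M2, mtyped G2 u M2 ->
  mtyped (env_union G1 G2) u (M1 ++ M2).
Proof.
  intros G1 u M1 H; induction H; intros G2 M2 H2; simpl.
  - constructor; auto.
  - eapply M_conv; [apply M_cons; [exact H| apply IHmtyped; exact H2]| |apply mset_refl].
    apply union_assoc.
  - eapply M_conv; [apply IHmtyped; exact H2| |].
    + apply env_union_eq; auto using env_eq_refl.
    + apply mset_app; auto using mset_refl.
Qed.

Lemma mtyped0_app : forall D1 D2 u M1 M2, mtyped0 D1 u M1 -> mtyped0 D2 u M2 ->
  mtyped0 (env_union D1 D2) u (M1 ++ M2).
Proof.
  intros D1 D2 u M1 M2 [[E1 H1]|H1] [[E2 H2]|H2]; subst; simpl.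
  - left; split; auto. eapply env_eq_trans; [apply env_union_eq; eauto|apply union_empty_l].
  - right. eapply M_conv; [exact H2| |apply mset_refl].
    eapply env_eq_trans; [apply env_eq_sym, union_empty_l|]. apply env_union_eq; auto using env_eq_refl, env_eq_sym.
  - right. rewrite app_nil_r. eapply M_conv; [exact H1| |apply mset_refl].
    eapply env_eq_trans; [apply env_eq_sym, union_empty_r|]. apply env_union_eq; auto using env_eq_refl, env_eq_sym.
  - right; apply mtyped_app; auto.
Qed.

Lemma ins_S : forall n M G, env_eq (ins (S n) M G) (env_ext (G 0) (ins n M (tl_env G))).
Proof.
  intros n M G [|k]; unfold ins, env_ext, tl_env; simpl; [apply mset_refl|].
  pw_split; try lia; try apply mset_refl.
  replace k with (S (pred k)) at 1 by lia. apply mset_refl.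
Qed.

Lemma mtyped_anti_subst (n : nat) (u t : term)
  (H : forall G s, typed G (subst n u t) s -> exists G' M D,
      typed (ins n M G') t s /\ mtyped0 D u M /\ env_eq G (env_union G' (liftenv n 0 D))) :
  forall G N, mtyped G (subst n u t) N -> exists G' M D,
      mtyped (ins n M G') t N /\ mtyped0 D u M /\ env_eq G (env_union G' (liftenv n 0 D)).
Proof.
  intros G N HM; remember (subst n u t) as x; induction HM; subst.
  - destruct (H _ _ H0) as [G' [M [D [K1 [K2 K3]]]]].
    exists G', M, D; repeat split; auto; constructor; auto.
  - destruct (H _ _ H0) as [G1 [M1 [D1 [K1 [K2 K3]]]]].
    destruct IHHM as [G2 [M2 [D2 [K4 [K5 K6]]]]]; auto.
    exists (env_union G1 G2), (M1 ++ M2), (env_union D1 D2); repeat split.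
    + eapply M_conv; [apply M_cons; eauto| |apply mset_refl]. pw.
    + apply mtyped0_app; auto.
    + eapply env_eq_trans; [apply env_union_eq; eauto|].
      eapply env_eq_trans; [apply union_mid|].
      apply env_union_eq; [apply env_eq_refl|apply liftenv_union].
  - destruct IHHM as [G2 [M2 [D2 [K4 [K5 K6]]]]]; auto.
    exists G2, M2, D2; repeat split; auto.
    + eapply M_conv; eauto using env_eq_refl.
    + eapply env_eq_trans; [apply env_eq_sym; eauto|auto].
Qed.

Lemma anti_subst : forall t n u G s, typed G (subst n u t) s -> exists G' M D,
      typed (ins n M G') t s /\ mtyped0 D u M /\ env_eq G (env_union G' (liftenv n 0 D)).
Proof.
  induction t as [m|t IH|a IHa b IHb r IHr]; intros n u G s H.
  - revert H; simpl; destruct (Nat.compare_spec m n) as [E|E|E]; intro H.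
    + subst. destruct (anti_lift _ _ _ _ _ H) as [D [K1 K2]].
      exists empty, [s], D; repeat split.
      * eapply T_conv; [apply T_var| |apply ty_eq_refl]. pw.
      * right; constructor; auto.
      * eapply env_eq_trans; [exact K2|]. apply env_eq_sym, union_empty_l.
    + apply inv_var in H as [s' [K1 K2]].
      exists (env_single m s'), [], empty; repeat split.
      * eapply T_conv; [apply T_var| |exact K1]. pw.
      * left; split; auto using env_eq_refl.
      * eapply env_eq_trans; [apply env_eq_sym; exact K2|]. pw; try (symmetry; apply app_nil_r).
    + apply inv_var in H as [s' [K1 K2]].
      exists (env_single (pred m) s'), [], empty; repeat split.
      * eapply T_conv; [apply T_var| |exact K1]. pw.
      * left; split; auto using env_eq_refl.
      * eapply env_eq_trans; [apply env_eq_sym; exact K2|]. pw; try (symmetry; apply app_nil_r).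
  - simpl in H. apply inv_lam in H as [G0 [M0 [s0 [K1 [K2 K3]]]]].
    destruct (IH _ _ _ _ K1) as [G' [M [D [K4 [K5 K6]]]]].
    assert (E0 : mset_eq (G' 0) M0).
    { specialize (K6 0); unfold env_union, liftenv in K6; simpl in K6.
      rewrite app_nil_r in K6. apply mset_sym; auto. }
    exists (tl_env G'), M, D; repeat split; auto.
    + eapply T_conv; [apply (T_abs _ (G' 0))| apply env_eq_refl|].
      * eapply T_conv; [exact K4| |apply ty_eq_refl]. apply ins_S.
      * eapply ty_eq_trans; [|exact K3]. apply ty_eq_arr; auto using ty_eq_refl.
    + eapply env_eq_trans; [apply env_eq_sym; exact K2|].
      eapply env_eq_trans; [apply (tl_eq _ _ K6)|]. pw.
  - simpl in H. apply inv_app in H as [G1 [D1 [Lm [L [tau0 [tau1 [K1 [K2 [K3 K4]]]]]]]]].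
    destruct (mtyped_anti_subst _ _ _ (IHa n u) _ _ K1) as [G1' [M1 [E1 [K5 [K6 K7]]]]].
    destruct (mtyped_anti_subst _ _ _ (IHb n u) _ _ K2) as [D1' [M2 [E2 [K8 [K9 K10]]]]].
    destruct (IHr _ _ _ _ K3) as [G3 [M3 [E3 [K11 [K12 K13]]]]].
    assert (E0 : mset_eq (G3 0) (map snd L)).
    { specialize (K13 0); unfold env_union, liftenv in K13; simpl in K13.
      rewrite app_nil_r in K13. apply mset_sym; auto. }
    exists (env_union G1' (env_union D1' (tl_env G3))), (M1 ++ (M2 ++ M3)),
           (env_union E1 (env_union E2 E3)); repeat split.
    + eapply T_conv; [eapply T_app; [exact K5|exact K8|]| |apply ty_eq_refl].
      * eapply T_conv; [exact K11| |apply ty_eq_refl].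
        intros [|k]; [apply E0|]. unfold ins, env_ext, tl_env. apply mset_refl.
      * pw. match goal with |- context [S (Init.Nat.pred ?x)] =>
              replace (S (Init.Nat.pred x)) with x by lia end. reflexivity.
    + apply mtyped0_app; auto. apply mtyped0_app; auto.
    + eapply env_eq_trans; [apply env_eq_sym; exact K4|].
      eapply env_eq_trans; [apply env_union_eq; [exact K7|apply env_union_eq; [exact K10|]]|].
      * apply (tl_eq _ _ K13).
      * eapply env_eq_trans; [apply env_union_eq;
           [apply env_eq_refl| eapply env_eq_trans; [apply env_union_eq; [apply env_eq_refl|] | apply union_mid]]|].
        -- assert (env_eq (tl_env (env_union G3 (liftenv (S n) 0 E3)))
                     (env_union (tl_env G3) (liftenv n 0 E3))) by pw. exact H.
        -- eapply env_eq_trans; [apply union_mid|].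
           apply env_union_eq; [apply env_eq_refl|].
           eapply env_eq_trans; [apply env_union_eq; [apply env_eq_refl|apply liftenv_union]|].
           apply liftenv_union.
Qed.
Lemma mtyped_nonempty : forall G t M, mtyped G t M -> M <> [].
Proof.
  intros G t M H; induction H; try congruence.
  intro E; subst; apply mset_nil in H1; auto.
Qed.

Lemma ch_ne : forall tau M, M <> [] -> ch tau M = M.
Proof. intros tau [|x M] H; simpl; congruence. Qed.

Lemma ins0_ext : forall M G, env_eq (ins 0 M G) (env_ext M G).
Proof. intros M G [|k]; apply mset_refl. Qed.

Lemma liftenv00 : forall D, env_eq (liftenv 0 0 D) D.
Proof. intros; pw. Qed.

Lemma plug_lemma : forall D u t Dl rho, occurs 0 t = true ->
  typed Dl (plug D (subst 0 (lift (ldepth D) 0 u) t)) rho ->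
  exists D1 D2 M, typed D1 (plug D (Lam t)) (TArr M rho) /\ mtyped D2 u M /\
                  env_eq Dl (env_union D1 D2).
Proof.
  induction D as [|a b D IH]; intros u t Dl rho Ht H; simpl in *.
  - rewrite lift_0 in H.
    destruct (anti_subst _ _ _ _ _ H) as [G' [M [E [K1 [K2 K3]]]]].
    assert (HM : M <> []) by (apply (relevance _ _ _ K1 0 Ht)).
    destruct K2 as [[K2 _]|K2]; [congruence|].
    exists G', E, M; repeat split; auto.
    + apply T_abs. eapply T_conv; [exact K1|apply ins0_ext|apply ty_eq_refl].
    + eapply env_eq_trans; [exact K3|]. apply env_union_eq; [apply env_eq_refl|apply liftenv00].
  - apply inv_app in H as [G1 [D1 [Lm [L [tau0 [tau1 [K1 [K2 [K3 K4]]]]]]]]].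
    replace (lift (S (ldepth D)) 0 u) with (lift (ldepth D) 0 (lift 1 0 u)) in K3
      by (rewrite lift_lift; f_equal; lia).
    destruct (IH _ _ _ _ Ht K3) as [D1' [D2' [M [K5 [K6 K7]]]]].
    destruct (mtyped_map _ _ _ (liftenv_union 1 0) (anti_lift u 1 0) _ _ K6) as [D2'' [K8 K9]].
    assert (E0 : mset_eq (D1' 0) (map snd L)).
    { specialize (K7 0). specialize (K9 0). unfold liftenv in K9; simpl in K9.
      apply mset_nil in K9. unfold env_union, env_ext in K7. rewrite K9, app_nil_r in K7.
      apply mset_sym; auto. }
    exists (env_union G1 (env_union D1 (tl_env D1'))), D2'', M; repeat split; auto.
    + eapply T_app; eauto. eapply T_conv; [exact K5|apply ext_tl; auto|apply ty_eq_refl].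
    + eapply env_eq_trans; [apply env_eq_sym; exact K4|].
      assert (HL : env_eq Lm (env_union (tl_env D1') D2'')).
      { eapply env_eq_trans; [apply (tl_eq _ _ K7)|].
        assert (env_eq (tl_env (env_union D1' D2')) (env_union (tl_env D1') (tl_env D2'))) by pw.
        eapply env_eq_trans; [exact H|]. apply env_union_eq; [apply env_eq_refl|].
        eapply env_eq_trans; [apply (tl_eq _ _ K9)|]. pw. }
      eapply env_eq_trans; [apply env_union_eq; [apply env_eq_refl|apply env_union_eq;
                              [apply env_eq_refl|exact HL]]|].
      eapply env_eq_trans; [apply env_union_eq; [apply env_eq_refl|apply union_assoc]|].
      apply union_assoc.
Qed.

Lemma mplug_lemma : forall D u t, occurs 0 t = true -> forall Dl N,
  mtyped Dl (plug D (subst 0 (lift (ldepth D) 0 u) t)) N ->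
  exists D1 D2 L, L <> [] /\ mtyped D1 (plug D (Lam t)) (map arr L) /\
     mtyped D2 u (concat (map fst L)) /\ mset_eq (map snd L) N /\
     env_eq Dl (env_union D1 D2).
Proof.
  intros D u t Ht Dl N H; remember (plug D (subst 0 (lift (ldepth D) 0 u) t)) as x.
  induction H; subst.
  - destruct (plug_lemma _ _ _ _ _ Ht H) as [D1 [D2 [M [K1 [K2 K3]]]]].
    exists D1, D2, [(M, s)]; repeat split; simpl; try congruence.
    + constructor; auto.
    + rewrite app_nil_r; auto.
    + apply mset_refl.
    + exact K3.
  - destruct (plug_lemma _ _ _ _ _ Ht H) as [D1 [D2 [M0 [K1 [K2 K3]]]]].
    destruct IHmtyped as [D1' [D2' [L [K4 [K5 [K6 [K7 K8]]]]]]]; auto.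
    exists (env_union D1 D1'), (env_union D2 D2'), ((M0, s) :: L); repeat split; simpl;
      try congruence.
    + constructor; auto.
    + apply mtyped_app; auto.
    + apply (mset_app [s] [s]); auto using mset_refl.
    + eapply env_eq_trans; [apply env_union_eq; eauto|]. apply union_mid.
  - destruct IHmtyped as [D1' [D2' [L [K4 [K5 [K6 [K7 K8]]]]]]]; auto.
    exists D1', D2', L; repeat split; auto.
    + eapply mset_trans; eauto.
    + eapply env_eq_trans; [apply env_eq_sym; eauto|auto].
Qed.

Lemma root_expand : forall t1 t2, dbeta_root_ne t1 t2 ->
  forall G s, typed G t2 s -> typed G t1 s.
Proof.
  intros t1 t2 HR; destruct HR as [D t u r Ht Hr]; intros G s H.
  destruct (anti_subst _ _ _ _ _ H) as [G' [N [E [K1 [K2 K3]]]]].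
  assert (HN : N <> []) by (apply (relevance _ _ _ K1 0 Hr)).
  destruct K2 as [[K2 _]|K2]; [congruence|].
  destruct (mplug_lemma _ _ _ Ht _ _ K2) as [D1 [D2 [L [K4 [K5 [K6 [K7 K8]]]]]]].
  eapply T_conv; [eapply (T_app D1 D2 G' _ _ _ _ L (TVar 0) (TVar 0))| |apply ty_eq_refl].
  - rewrite ch_ne; auto. destruct L; simpl; congruence.
  - rewrite ch_ne; eauto using mtyped_nonempty.
  - eapply T_conv; [exact K1| |apply ty_eq_refl].
    intros [|k]; [apply mset_sym; exact K7|apply mset_refl].
  - apply env_eq_sym. eapply env_eq_trans; [exact K3|].
    eapply env_eq_trans; [apply env_union_eq; [apply env_eq_refl|apply liftenv00]|].
    eapply env_eq_trans; [apply env_union_eq; [apply env_eq_refl|exact K8]|].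
    eapply env_eq_trans; [apply union_comm|]. apply env_eq_sym, union_assoc.
Qed.

Lemma mtyped_pres (X Y : term) (H : forall G s, typed G X s -> typed G Y s) :
  forall G M, mtyped G X M -> mtyped G Y M.
Proof.
  intros G M HM; remember X as x; induction HM; subst.
  - constructor; auto.
  - constructor; auto.
  - eapply M_conv; eauto.
Qed.

Theorem mainTheorem11 :
  forall (G : env) (t1 t2 : term) (s : ty),
    typed G t2 s -> dbeta_step_ne t1 t2 -> typed G t1 s.
Proof.
  intros G t1 t2 s H HS; revert G s H; induction HS; intros G s HT; rename HT into H0.
  - eapply root_expand; eauto.
  - apply inv_lam in H0 as [G0 [M [s0 [K1 [K2 K3]]]]].
    eapply T_conv; [apply T_abs; apply IHHS; exact K1|exact K2|exact K3].
  - apply inv_app in H0 as [G1 [D1 [Lm [L [tau0 [tau1 [K1 [K2 [K3 K4]]]]]]]]].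
    eapply T_conv; [eapply T_app; [eapply mtyped_pres; eauto|eauto|eauto]|exact K4|apply ty_eq_refl].
  - apply inv_app in H0 as [G1 [D1 [Lm [L [tau0 [tau1 [K1 [K2 [K3 K4]]]]]]]]].
    eapply T_conv; [eapply T_app; [eauto|eapply mtyped_pres; eauto|eauto]|exact K4|apply ty_eq_refl].
  - apply inv_app in H0 as [G1 [D1 [Lm [L [tau0 [tau1 [K1 [K2 [K3 K4]]]]]]]]].
    eapply T_conv; [eapply T_app; [eauto|eauto|eauto]|exact K4|apply ty_eq_refl].
Qed.
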